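(* Let two circles $\Omega$ and $\omega$ meet at a point $X$. Let $A, B, C, D$ be points on $\omega$ with $AB \parallel CD$. Let lines $XA, XB, XC, XD$ meet $\Omega$ again at $E, F, G, H$ respectively. Then $EF \parallel GH$. *)

(* Defs.v *)
From HB Require Import structures.
From mathcomp Require Import all_boot all_order all_algebra.
Set Implicit Arguments. Unset Strict Implicit. Unset Printing Implicit Defensive.
Import Order.TTheory GRing.Theory Num.Theory.
Local Open Scope ring_scope.

Definition point (R : realFieldType) := (R * R)%type.

Section Geo.
Variable R : realFieldType.

Definition dot (u v : point R) : R := u.1 * v.1 + u.2 * v.2.
Definition vsub (Q P : point R) : point R := (Q.1 - P.1, Q.2 - P.2).
Definition cross (u v : point R) : R := u.1 * v.2 - u.2 * v.1.

Record circle := Circle { center : point R; radius : R }.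
Definition on_circle (c : circle) (P : point R) : Prop :=
  dot (vsub P (center c)) (vsub P (center c)) = radius c ^+ 2.

Definition collinear (P Q S : point R) : Prop := cross (vsub Q P) (vsub S P) = 0.

(* line PQ is parallel to line P'Q' (coincident lines count as parallel) *)
Definition parallel (P Q P' Q' : point R) : Prop :=
  cross (vsub Q P) (vsub Q' P') = 0.

Definition tangent_at (c : circle) (X A : point R) : Prop :=
  dot (vsub A X) (vsub X (center c)) = 0.

(* E is the second intersection ("meets again") of line XA with circle c,
   where X lies on c and A <> X: E lies on c and on line XA, and E differs
   from X unless line XA is tangent to c at X (then E = X). *)
Definition second_inter (c : circle) (X A E : point R) : Prop :=
  on_circle c E /\ collinear X A E /\ (E <> X \/ tangent_at c X A).

End Geo.

(* Main.v *)
Require Import Defs.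
From mathcomp Require Import all_boot all_order all_algebra.
From mathcomp Require Import ring lra.
Import Order.TTheory GRing.Theory Num.Theory.
Local Open Scope ring_scope.

Lemma key (R : realFieldType) (a1 a2 u1 u2 w1 w2 e1 e2 : R) :
  a1 * a1 + a2 * a2 = 2 * (a1 * u1 + a2 * u2) -> (a1 != 0) || (a2 != 0) ->
  a1 * e2 - a2 * e1 = 0 -> e1 * e1 + e2 * e2 = 2 * (e1 * w1 + e2 * w2) ->
  (e1 = 0 -> e2 = 0 -> a1 * w1 + a2 * w2 = 0) ->
  u1 * (e1 - w1) + u2 * (e2 - w2) = w1 * (a1 - u1) + w2 * (a2 - u2) /\
  u1 * (e2 - w2) - u2 * (e1 - w1) = w1 * (a2 - u2) - w2 * (a1 - u1).
Proof.
move=> h ha hc he ht.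
have Na : a1 * a1 + a2 * a2 != 0.
  by rewrite -!expr2 paddr_eq0 ?sqr_ge0 // !sqrf_eq0 negb_and.
set N := a1 * a1 + a2 * a2 in Na h.
set s := (e1 * a1 + e2 * a2) / N.
have E1 : e1 = s * a1.
  rewrite /s mulrAC; apply: (mulIf Na); rewrite divfK //.
  have -> : e1 * N = (e1 * a1 + e2 * a2) * a1 - a2 * (a1 * e2 - a2 * e1) by rewrite /N; ring.
  by rewrite hc; ring.
have E2 : e2 = s * a2.
  rewrite /s mulrAC; apply: (mulIf Na); rewrite divfK //.
  have -> : e2 * N = (e1 * a1 + e2 * a2) * a2 + a1 * (a1 * e2 - a2 * e1) by rewrite /N; ring.
  by rewrite hc; ring.
have hs : s * N = 2 * (a1 * w1 + a2 * w2).
  have [s0|s0] := eqVneq s 0.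
    rewrite s0 mul0r ht ?E1 ?E2 ?s0 ?mul0r //; ring.
  apply: (mulfI s0).
  have -> : s * (s * N) = e1 * e1 + e2 * e2 by rewrite E1 E2 /N; ring.
  by rewrite he E1 E2; ring.
set Z1 := u1 * (e1 - w1) + u2 * (e2 - w2) - (w1 * (a1 - u1) + w2 * (a2 - u2)).
set Z2 := u1 * (e2 - w2) - u2 * (e1 - w1) - (w1 * (a2 - u2) - w2 * (a1 - u1)).
set T := s * N - 2 * (a1 * w1 + a2 * w2).
set Hh := N - 2 * (a1 * u1 + a2 * u2).
have R1 : a1 * Z1 + a2 * Z2 = u1 * T - w1 * Hh by rewrite /Z1 /Z2 /T /Hh /N E1 E2; ring.
have R2 : a1 * Z2 - a2 * Z1 = - u2 * T + w2 * Hh by rewrite /Z1 /Z2 /T /Hh /N E1 E2; ring.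
have T0 : T = 0 by rewrite /T hs subrr.
have H0 : Hh = 0 by rewrite /Hh h subrr.
rewrite T0 H0 !mulr0 subrr addr0 in R1 R2.
have Z10 : Z1 = 0.
  apply: (mulIf Na); rewrite mul0r.
  have -> : Z1 * N = a1 * (a1 * Z1 + a2 * Z2) - a2 * (a1 * Z2 - a2 * Z1) by rewrite /N; ring.
  by rewrite R1 R2; ring.
have Z20 : Z2 = 0.
  apply: (mulIf Na); rewrite mul0r.
  have -> : Z2 * N = a2 * (a1 * Z1 + a2 * Z2) + a1 * (a1 * Z2 - a2 * Z1) by rewrite /N; ring.
  by rewrite R1 R2; ring.
by split; apply/eqP; rewrite -subr_eq0; apply/eqP.
Qed.

Lemma step (R : realFieldType) (Om om : circle R) (X P E : point R) :
  on_circle Om X -> on_circle om X -> on_circle om P -> P <> X ->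
  second_inter Om X P E ->
  let u := vsub (center om) X in let w := vsub (center Om) X in
  let O := center Om in let Q := center om in
  u.1 * (E.1 - O.1) + u.2 * (E.2 - O.2) = w.1 * (P.1 - Q.1) + w.2 * (P.2 - Q.2) /\
  u.1 * (E.2 - O.2) - u.2 * (E.1 - O.1) = w.1 * (P.2 - Q.2) - w.2 * (P.1 - Q.1).
Proof.
case: Om => [[o1 o2] r1]; case: om => [[q1 q2] r2].
case: X => [x1 x2]; case: P => [p1 p2]; case: E => [e1 e2].
rewrite /second_inter /on_circle /collinear /tangent_at /dot /vsub /cross /=.
move=> hOX hoX hoP hPX [hOE [hc ht]].
have := @key R (p1 - x1) (p2 - x2) (q1 - x1) (q2 - x2) (o1 - x1) (o2 - x2) (e1 - x1) (e2 - x2).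
have H1 : (p1 - x1) * (p1 - x1) + (p2 - x2) * (p2 - x2) =
   2 * ((p1 - x1) * (q1 - x1) + (p2 - x2) * (q2 - x2)).
  lra.
have ha : (p1 - x1 != 0) || (p2 - x2 != 0).
  rewrite -negb_and; apply/negP => /andP [/eqP h1 /eqP h2]; apply: hPX; congr (_, _); lra.
have He : (e1 - x1) * (e1 - x1) + (e2 - x2) * (e2 - x2) =
   2 * ((e1 - x1) * (o1 - x1) + (e2 - x2) * (o2 - x2)) by lra.
have Ht : e1 - x1 = 0 -> e2 - x2 = 0 -> (p1 - x1) * (o1 - x1) + (p2 - x2) * (o2 - x2) = 0.
  move=> h1 h2; case: ht => [hEX|ht]; last by lra.
  by exfalso; apply: hEX; congr (_, _); lra.
move=> /(_ H1 ha hc He Ht) [k1 k2]; split; lra.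
Qed.

Theorem lemma4p2 (R : realFieldType) (Om om : circle R)
  (X A B C D E F G H : point R) :
  0 < radius Om -> 0 < radius om ->
  on_circle Om X -> on_circle om X ->
  on_circle om A -> on_circle om B -> on_circle om C -> on_circle om D ->
  A <> X -> B <> X -> C <> X -> D <> X ->
  A <> B -> C <> D ->
  parallel A B C D ->
  second_inter Om X A E -> second_inter Om X B F ->
  second_inter Om X C G -> second_inter Om X D H ->
  E <> F /\ G <> H /\ parallel E F G H.
Proof.
move=> r1p r2p hOX hoX hoA hoB hoC hoD hAX hBX hCX hDX hAB hCD hpar hE hF hG hH.
have [sA1 sA2] := @step R Om om X A E hOX hoX hoA hAX hE.
have [sB1 sB2] := @step R Om om X B F hOX hoX hoB hBX hF.
have [sC1 sC2] := @step R Om om X C G hOX hoX hoC hCX hG.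
have [sD1 sD2] := @step R Om om X D H hOX hoX hoD hDX hH.
move: r1p r2p hOX hoX hpar sA1 sA2 sB1 sB2 sC1 sC2 sD1 sD2 hAB hCD.
case: Om hE hF hG hH => [[o1 o2] r1] _ _ _ _; case: om hoA hoB hoC hoD => [[q1 q2] r2] _ _ _ _.
case: X hAX hBX hCX hDX => [x1 x2] _ _ _ _.
case: A => [a1 a2]; case: B => [b1 b2]; case: C => [c1 c2]; case: D => [d1 d2].
case: E => [e1 e2]; case: F => [f1 f2]; case: G => [g1 g2]; case: H => [h1 h2].
rewrite /parallel /on_circle /dot /vsub /cross /=.
move=> r1p r2p hOX hoX hpar sA1 sA2 sB1 sB2 sC1 sC2 sD1 sD2 hAB hCD.
set u1 := q1 - x1 in sA1 sA2 sB1 sB2 sC1 sC2 sD1 sD2 *.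
set u2 := q2 - x2 in sA1 sA2 sB1 sB2 sC1 sC2 sD1 sD2 *.
set w1 := o1 - x1 in sA1 sA2 sB1 sB2 sC1 sC2 sD1 sD2 *.
set w2 := o2 - x2 in sA1 sA2 sB1 sB2 sC1 sC2 sD1 sD2 *.
have Nu : u1 * u1 + u2 * u2 != 0.
  have -> : u1 * u1 + u2 * u2 = r2 ^+ 2 by rewrite /u1 /u2; lra.
  by rewrite expf_neq0 // gt_eqF.
have Nw : w1 * w1 + w2 * w2 != 0.
  have -> : w1 * w1 + w2 * w2 = r1 ^+ 2 by rewrite /w1 /w2; lra.
  by rewrite expf_neq0 // gt_eqF.
have neq : forall p1 p2 p'1 p'2 s1 s2 s'1 s'2 : R,
   u1 * (s1 - o1) + u2 * (s2 - o2) = w1 * (p1 - q1) + w2 * (p2 - q2) ->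
   u1 * (s2 - o2) - u2 * (s1 - o1) = w1 * (p2 - q2) - w2 * (p1 - q1) ->
   u1 * (s'1 - o1) + u2 * (s'2 - o2) = w1 * (p'1 - q1) + w2 * (p'2 - q2) ->
   u1 * (s'2 - o2) - u2 * (s'1 - o1) = w1 * (p'2 - q2) - w2 * (p'1 - q1) ->
   (p1, p2) <> (p'1, p'2) -> (s1, s2) <> (s'1, s'2).
  move=> p1 p2 p'1 p'2 s1 s2 s'1 s'2 k1 k2 k3 k4 hp [e1' e2'].
  subst s'1 s'2.
  have m1 : w1 * (p'1 - p1) + w2 * (p'2 - p2) = 0 by lra.
  have m2 : w1 * (p'2 - p2) - w2 * (p'1 - p1) = 0 by lra.
  apply: hp.
  have z1 : p'1 - p1 = 0.
    apply: (mulIf Nw); rewrite mul0r.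
    have -> : (p'1 - p1) * (w1 * w1 + w2 * w2) = w1 * (w1 * (p'1 - p1) + w2 * (p'2 - p2)) - w2 * (w1 * (p'2 - p2) - w2 * (p'1 - p1)) by ring.
    by rewrite m1 m2; ring.
  have z2 : p'2 - p2 = 0.
    apply: (mulIf Nw); rewrite mul0r.
    have -> : (p'2 - p2) * (w1 * w1 + w2 * w2) = w2 * (w1 * (p'1 - p1) + w2 * (p'2 - p2)) + w1 * (w1 * (p'2 - p2) - w2 * (p'1 - p1)) by ring.
    by rewrite m1 m2; ring.
  congr (_, _); lra.
split; first exact: (neq _ _ _ _ _ _ _ _ sA1 sA2 sB1 sB2 hAB).
split; first exact: (neq _ _ _ _ _ _ _ _ sC1 sC2 sD1 sD2 hCD).
apply: (mulIf Nu); rewrite mul0r.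
have X1 : u1 * (f1 - e1) + u2 * (f2 - e2) = w1 * (b1 - a1) + w2 * (b2 - a2) by lra.
have X2 : u1 * (f2 - e2) - u2 * (f1 - e1) = w1 * (b2 - a2) - w2 * (b1 - a1) by lra.
have Y1 : u1 * (h1 - g1) + u2 * (h2 - g2) = w1 * (d1 - c1) + w2 * (d2 - c2) by lra.
have Y2 : u1 * (h2 - g2) - u2 * (h1 - g1) = w1 * (d2 - c2) - w2 * (d1 - c1) by lra.
have -> : ((f1 - e1) * (h2 - g2) - (f2 - e2) * (h1 - g1)) * (u1 * u1 + u2 * u2) =
  (u1 * (f1 - e1) + u2 * (f2 - e2)) * (u1 * (h2 - g2) - u2 * (h1 - g1)) -
  (u1 * (f2 - e2) - u2 * (f1 - e1)) * (u1 * (h1 - g1) + u2 * (h2 - g2)) by ring.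
rewrite X1 X2 Y1 Y2.
have -> : (w1 * (b1 - a1) + w2 * (b2 - a2)) * (w1 * (d2 - c2) - w2 * (d1 - c1)) -
  (w1 * (b2 - a2) - w2 * (b1 - a1)) * (w1 * (d1 - c1) + w2 * (d2 - c2)) =
  (w1 * w1 + w2 * w2) * ((b1 - a1) * (d2 - c2) - (b2 - a2) * (d1 - c1)) by ring.
by rewrite hpar mulr0.
Qed.
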